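(* Assume the total harvested energy is finite. The optimal value of problem (P) equals the optimal value of problem (Q): $$\max_{\{\bar p_{k,i}\}}\ \sum_{i=1}^N R(\bar p_{1,i},\bar p_{2,i})$$ subject to $\sum_{n=1}^{i}(E_{k,n}-\bar p_{k,n})\ge 0$ and $\bar p_{k,i}\ge0$ for $k=1,2$, $i=1,\dots,N$. Moreover, suppose $\{\bar p_{k,i}\}$ is optimal for (Q), and for each $i$ the pair $(\delta_{1,i},\delta_{2,i})$ attains the maximum defining $R(\bar p_{1,i},\bar p_{2,i})$. Set $p_{k,i}=\bar p_{k,i}-\delta_{k,i}+\alpha_j\delta_{j,i}$ ($j\ne k$). Then $\{p_{k,i},\delta_{k,i}\}$ is an optimal solution of (P).
   Context: Two-way channel setting. There are two nodes, $N$ unit-length slots, channel gains $h_1,h_2>0$, noise powers $\sigma_1^2,\sigma_2^2>0$, efficiencies $\alpha_1,\alpha_2\in[0,1]$, and harvested energies $E_{k,i}\ge0$. A power policy is $\{p_{k,i},\delta_{k,i}\}$. Here $p_{k,i}$ is the transmit power of $T_k$ in slot $i$, and $\delta_{k,i}$ is the energy $T_k$ sends to $T_j$ ($j\ne k$), of which $\alpha_k\delta_{k,i}$ is received. The battery state is $$S_{k,i}=\sum_{n=1}^{i}(E_{k,n}-p_{k,n}+\alpha_j\delta_{j,n}-\delta_{k,n}).$$ Let $$C(p_1,p_2)=\tfrac12\log(1+h_1p_1/\sigma_2^2)+\tfrac12\log(1+h_2p_2/\sigma_1^2).$$ Problem (P) is to maximize $\sum_i C(p_{1,i},p_{2,i})$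 subject to $S_{k,i}\ge0$, $p_{k,i}\ge0$ and $\delta_{k,i}\ge0$ for all $k,i$. For $\pi_1,\pi_2\ge0$, define $$R(\pi_1,\pi_2)=\max\{C(\pi_1-\delta_1+\alpha_2\delta_2,\ \pi_2-\delta_2+\alpha_1\delta_1):\ 0\le\delta_k\le\pi_k,\ k=1,2\}.$$ *)

(* Defs.v *)
From Stdlib Require Import Reals List ClassicalEpsilon.
Import ListNotations.
Open Scope R_scope.

(* psum f i = f 1 + ... + f i  (slots are indexed 1..N) *)
Definition psum (f : nat -> R) (i : nat) : R :=
  fold_right Rplus 0 (map f (seq 1 i)).

(* C(p1,p2) = 1/2 log(1 + h1 p1/s2) + 1/2 log(1 + h2 p2/s1), s_k = sigma_k^2 *)
Definition Cap (h1 h2 s1 s2 : R) (p1 p2 : R) : R :=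
  / 2 * ln (1 + h1 * p1 / s2) + / 2 * ln (1 + h2 * p2 / s1).

Definition Rset (h1 h2 s1 s2 a1 a2 : R) (pi1 pi2 : R) (r : R) : Prop :=
  exists d1 d2, 0 <= d1 <= pi1 /\ 0 <= d2 <= pi2 /\
    r = Cap h1 h2 s1 s2 (pi1 - d1 + a2 * d2) (pi2 - d2 + a1 * d1).

Definition is_maximizer (h1 h2 s1 s2 a1 a2 : R) (pi1 pi2 d1 d2 : R) : Prop :=
  0 <= d1 <= pi1 /\ 0 <= d2 <= pi2 /\
  forall e1 e2, 0 <= e1 <= pi1 -> 0 <= e2 <= pi2 ->
    Cap h1 h2 s1 s2 (pi1 - e1 + a2 * e2) (pi2 - e2 + a1 * e1)
    <= Cap h1 h2 s1 s2 (pi1 - d1 + a2 * d2) (pi2 - d2 + a1 * d1).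

(* R(pi1,pi2): the maximum (= least upper bound, which is attained) of Rset *)
Definition Rfun (h1 h2 s1 s2 a1 a2 : R) (pi1 pi2 : R) : R :=
  epsilon (inhabits 0) (fun r => is_lub (Rset h1 h2 s1 s2 a1 a2 pi1 pi2) r).

(* battery state S_{k,i} for node k with own (E,p,delta) and partner delta dj,
   partner efficiency aj *)
Definition battery (E p d dj : nat -> R) (aj : R) (i : nat) : R :=
  psum (fun n => E n - p n + aj * dj n - d n) i.

Definition feasibleP (N : nat) (a1 a2 : R) (E1 E2 p1 p2 d1 d2 : nat -> R) : Prop :=
  forall i, (1 <= i <= N)%nat ->
    0 <= battery E1 p1 d1 d2 a2 i /\ 0 <= battery E2 p2 d2 d1 a1 i /\
    0 <= p1 i /\ 0 <= p2 i /\ 0 <= d1 i /\ 0 <= d2 i.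

Definition objP (N : nat) (h1 h2 s1 s2 : R) (p1 p2 : nat -> R) : R :=
  psum (fun i => Cap h1 h2 s1 s2 (p1 i) (p2 i)) N.

Definition valuesP N h1 h2 s1 s2 a1 a2 E1 E2 (v : R) : Prop :=
  exists p1 p2 d1 d2, feasibleP N a1 a2 E1 E2 p1 p2 d1 d2 /\
    v = objP N h1 h2 s1 s2 p1 p2.

Definition optimalP N h1 h2 s1 s2 a1 a2 E1 E2 (p1 p2 d1 d2 : nat -> R) : Prop :=
  feasibleP N a1 a2 E1 E2 p1 p2 d1 d2 /\
  forall q1 q2 e1 e2, feasibleP N a1 a2 E1 E2 q1 q2 e1 e2 ->
    objP N h1 h2 s1 s2 q1 q2 <= objP N h1 h2 s1 s2 p1 p2.

Definition feasibleQ (N : nat) (E1 E2 pb1 pb2 : nat -> R) : Prop :=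
  forall i, (1 <= i <= N)%nat ->
    0 <= psum (fun n => E1 n - pb1 n) i /\ 0 <= psum (fun n => E2 n - pb2 n) i /\
    0 <= pb1 i /\ 0 <= pb2 i.

Definition objQ N h1 h2 s1 s2 a1 a2 (pb1 pb2 : nat -> R) : R :=
  psum (fun i => Rfun h1 h2 s1 s2 a1 a2 (pb1 i) (pb2 i)) N.

Definition valuesQ N h1 h2 s1 s2 a1 a2 E1 E2 (v : R) : Prop :=
  exists pb1 pb2, feasibleQ N E1 E2 pb1 pb2 /\ v = objQ N h1 h2 s1 s2 a1 a2 pb1 pb2.

Definition optimalQ N h1 h2 s1 s2 a1 a2 E1 E2 (pb1 pb2 : nat -> R) : Prop :=
  feasibleQ N E1 E2 pb1 pb2 /\
  forall q1 q2, feasibleQ N E1 E2 q1 q2 ->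
    objQ N h1 h2 s1 s2 a1 a2 q1 q2 <= objQ N h1 h2 s1 s2 a1 a2 pb1 pb2.

(* Main.v *)
Require Import Defs.
From Stdlib Require Import Reals List ClassicalEpsilon Lra Lia Classical FunctionalExtensionality Arith.
Import ListNotations.
Import Defs.
Open Scope R_scope.

Lemma fr_shift (l : list R) (a : R) : fold_right Rplus a l = fold_right Rplus 0 l + a.
Proof. induction l; simpl; [lra| rewrite IHl; lra]. Qed.

Lemma psum_S f i : psum f (S i) = psum f i + f (S i).
Proof.
  unfold psum. rewrite seq_S, map_app, fold_right_app. simpl.
  rewrite fr_shift. replace (1 + i)%nat with (S i) by lia. lra.
Qed.

Lemma psum_0 f : psum f 0 = 0.
Proof. reflexivity. Qed.

Lemma psum_ext f g n : (forall i, (1 <= i <= n)%nat -> f i = g i) -> psum f n = psum g n.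
Proof.
  induction n; intros H; [reflexivity|].
  rewrite !psum_S, IHn, H; [reflexivity|lia|].
  intros; apply H; lia.
Qed.

Lemma psum_le f g n : (forall i, (1 <= i <= n)%nat -> f i <= g i) -> psum f n <= psum g n.
Proof.
  induction n; intros H; [rewrite !psum_0; lra|].
  rewrite !psum_S. assert (f (S n) <= g (S n)) by (apply H; lia).
  assert (psum f n <= psum g n) by (apply IHn; intros; apply H; lia). lra.
Qed.

Lemma psum_minus f g n : psum (fun i => f i - g i) n = psum f n - psum g n.
Proof. induction n; [rewrite !psum_0; lra| rewrite !psum_S, IHn; lra]. Qed.

Lemma psum_const c n : psum (fun _ => c) n = INR n * c.
Proof. induction n; [rewrite psum_0; simpl; lra| rewrite psum_S, IHn, S_INR; lra]. Qed.

Lemma psum_nonneg f n : (forall i, (1 <= i <= n)%nat -> 0 <= f i) -> 0 <= psum f n.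
Proof. intros H. rewrite <- (Rmult_0_r (INR n)), <- psum_const. apply psum_le; auto. Qed.

Lemma psum_mono f i j : (forall n, (1 <= n <= j)%nat -> 0 <= f n) -> (i <= j)%nat -> psum f i <= psum f j.
Proof.
  intros H Hij. induction Hij; [lra|].
  rewrite psum_S. assert (0 <= f (S m)) by (apply H; lia).
  assert (psum f i <= psum f m) by (apply IHHij; intros; apply H; lia). lra.
Qed.

Lemma psum_term f i : (forall n, (1 <= n <= i)%nat -> 0 <= f n) -> (1 <= i)%nat -> f i <= psum f i.
Proof.
  intros H Hi. destruct i; [lia|]. rewrite psum_S.
  assert (0 <= psum f i) by (apply psum_nonneg; intros; apply H; lia). lra.
Qed.

Lemma ln_le' x y : 0 < x -> x <= y -> ln x <= ln y.
Proof. intros Hx [H|H]; [left; apply ln_increasing; auto| subst; lra]. Qed.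

Lemma Cap_le h1 h2 s1 s2 x1 x2 y1 y2 : 0 < h1 -> 0 < h2 -> 0 < s1 -> 0 < s2 ->
  0 <= x1 <= y1 -> 0 <= x2 <= y2 -> Cap h1 h2 s1 s2 x1 x2 <= Cap h1 h2 s1 s2 y1 y2.
Proof.
  intros. unfold Cap. unfold Rdiv.
  assert (0 < / s2) by (apply Rinv_0_lt_compat; lra).
  assert (0 < / s1) by (apply Rinv_0_lt_compat; lra).
  assert (0 <= h1 * x1 * / s2) by (apply Rmult_le_pos; nra).
  assert (0 <= h2 * x2 * / s1) by (apply Rmult_le_pos; nra).
  assert (h1 * x1 * / s2 <= h1 * y1 * / s2) by (apply Rmult_le_compat_r; nra).
  assert (h2 * x2 * / s1 <= h2 * y2 * / s1) by (apply Rmult_le_compat_r; nra).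
  assert (ln (1 + h1 * x1 * / s2) <= ln (1 + h1 * y1 * / s2)) by (apply ln_le'; lra).
  assert (ln (1 + h2 * x2 * / s1) <= ln (1 + h2 * y2 * / s1)) by (apply ln_le'; lra).
  lra.
Qed.


Lemma Rfun_lub h1 h2 s1 s2 a1 a2 pi1 pi2 : 0 < h1 -> 0 < h2 -> 0 < s1 -> 0 < s2 ->
  0 <= a1 <= 1 -> 0 <= a2 <= 1 -> 0 <= pi1 -> 0 <= pi2 ->
  is_lub (Rset h1 h2 s1 s2 a1 a2 pi1 pi2) (Rfun h1 h2 s1 s2 a1 a2 pi1 pi2)
  /\ Rfun h1 h2 s1 s2 a1 a2 pi1 pi2 <= Cap h1 h2 s1 s2 (pi1 + pi2) (pi1 + pi2).
Proof.
  intros.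
  assert (Hb : is_upper_bound (Rset h1 h2 s1 s2 a1 a2 pi1 pi2) (Cap h1 h2 s1 s2 (pi1 + pi2) (pi1 + pi2))).
  { intros r [e1 [e2 [He1 [He2 ->]]]]. apply Cap_le; auto; split; nra. }
  assert (Hne : exists x, Rset h1 h2 s1 s2 a1 a2 pi1 pi2 x).
  { exists (Cap h1 h2 s1 s2 (pi1 - 0 + a2 * 0) (pi2 - 0 + a1 * 0)). exists 0, 0. repeat split; lra. }
  destruct (completeness _ (ex_intro _ _ Hb) Hne) as [m Hm].
  assert (Hl : is_lub (Rset h1 h2 s1 s2 a1 a2 pi1 pi2) (Rfun h1 h2 s1 s2 a1 a2 pi1 pi2)).
  { unfold Rfun. apply epsilon_spec. exists m; auto. }
  split; auto. apply Hl; auto.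
Qed.

Lemma Rfun_ge h1 h2 s1 s2 a1 a2 pi1 pi2 e1 e2 : 0 < h1 -> 0 < h2 -> 0 < s1 -> 0 < s2 ->
  0 <= a1 <= 1 -> 0 <= a2 <= 1 -> 0 <= e1 <= pi1 -> 0 <= e2 <= pi2 ->
  Cap h1 h2 s1 s2 (pi1 - e1 + a2 * e2) (pi2 - e2 + a1 * e1) <= Rfun h1 h2 s1 s2 a1 a2 pi1 pi2.
Proof.
  intros. destruct (Rfun_lub h1 h2 s1 s2 a1 a2 pi1 pi2) as [[Hu _] _]; try lra.
  apply Hu. exists e1, e2. repeat split; lra.
Qed.

Lemma Rfun_max h1 h2 s1 s2 a1 a2 pi1 pi2 d1 d2 :
  is_maximizer h1 h2 s1 s2 a1 a2 pi1 pi2 d1 d2 ->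
  Rfun h1 h2 s1 s2 a1 a2 pi1 pi2 = Cap h1 h2 s1 s2 (pi1 - d1 + a2 * d2) (pi2 - d2 + a1 * d1).
Proof.
  intros [H1 [H2 H3]].
  assert (Hl : is_lub (Rset h1 h2 s1 s2 a1 a2 pi1 pi2) (Cap h1 h2 s1 s2 (pi1 - d1 + a2 * d2) (pi2 - d2 + a1 * d1))).
  { split.
    - intros r [e1 [e2 [He1 [He2 ->]]]]. apply H3; auto.
    - intros b Hb. apply Hb. exists d1, d2. auto. }
  assert (Hr : is_lub (Rset h1 h2 s1 s2 a1 a2 pi1 pi2) (Rfun h1 h2 s1 s2 a1 a2 pi1 pi2)).
  { unfold Rfun. apply epsilon_spec. eauto. }
  eapply is_lub_u; eauto.
Qed.

Lemma QtoP N a1 a2 E1 E2 pb1 pb2 d1 d2 : 0 <= a1 <= 1 -> 0 <= a2 <= 1 ->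
  feasibleQ N E1 E2 pb1 pb2 ->
  (forall i, (1 <= i <= N)%nat -> 0 <= d1 i <= pb1 i /\ 0 <= d2 i <= pb2 i) ->
  feasibleP N a1 a2 E1 E2 (fun i => pb1 i - d1 i + a2 * d2 i) (fun i => pb2 i - d2 i + a1 * d1 i) d1 d2.
Proof.
  intros Ha1 Ha2 HQ Hd i Hi. destruct (HQ i Hi) as [Q1 [Q2 [Q3 Q4]]].
  destruct (Hd i Hi) as [[D1 D2] [D3 D4]].
  unfold battery. repeat split; try nra.
  - rewrite (psum_ext _ (fun n => E1 n - pb1 n)); auto. intros; ring.
  - rewrite (psum_ext _ (fun n => E2 n - pb2 n)); auto. intros; ring.
Qed.

Definition gstep (a1 a2 B1 B2 e1 e2 : R) : (R * R) * (R * R) :=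
  let b1 := B1 + e1 in let b2 := B2 + e2 in
  if Rlt_dec b1 0 then ((0, b2 + b1 / a2), (0, - b1 / a2))
  else if Rlt_dec b2 0 then ((b1 + b2 / a1, 0), (- b2 / a1, 0))
  else ((b1, b2), (0, 0)).

Lemma step_ok a1 a2 B1 B2 S1 S2 E1 E2 p1 p2 d1 d2 :
 0 <= a1 <= 1 -> 0 <= a2 <= 1 -> 0 <= B1 -> 0 <= B2 -> 0 <= E1 -> 0 <= E2 -> 0 <= d1 -> 0 <= d2 -> 0 <= p1 -> 0 <= p2 ->
 0 <= (B1 - S1) + a2 * (B2 - S2) -> 0 <= a1 * (B1 - S1) + (B2 - S2) ->
 0 <= S1 + (E1 - p1 + a2 * d2 - d1) -> 0 <= S2 + (E2 - p2 + a1 * d1 - d2) ->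
 let r := gstep a1 a2 B1 B2 (E1 - p1) (E2 - p2) in
 0 <= fst (fst r) /\ 0 <= snd (fst r) /\ 0 <= fst (snd r) /\ 0 <= snd (snd r) /\
 a2 * snd (snd r) <= p1 /\ a1 * fst (snd r) <= p2 /\
 fst (fst r) = B1 + (E1 - (p1 - a2 * snd (snd r) + fst (snd r))) /\
 snd (fst r) = B2 + (E2 - (p2 - a1 * fst (snd r) + snd (snd r))) /\
 0 <= (fst (fst r) - (S1 + (E1 - p1 + a2 * d2 - d1))) + a2 * (snd (fst r) - (S2 + (E2 - p2 + a1 * d1 - d2))) /\
 0 <= a1 * (fst (fst r) - (S1 + (E1 - p1 + a2 * d2 - d1))) + (snd (fst r) - (S2 + (E2 - p2 + a1 * d1 - d2))).
Proof.
  intros Ha1 Ha2 HB1 HB2 HE1 HE2 Hd1 Hd2 Hp1 Hp2 L1 L2 HS1 HS2 r.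
  set (S1' := S1 + (E1 - p1 + a2 * d2 - d1)) in *.
  set (S2' := S2 + (E2 - p2 + a1 * d1 - d2)) in *.
  assert (Hk : 0 <= 1 - a1 * a2) by nra.
  assert (I1 : a2 * (B2 + (E2 - p2)) + (B1 + (E1 - p1)) - a2 * (a1 * S1' + S2')
     = ((B1 - S1) + a2 * (B2 - S2)) + (1 - a1 * a2) * ((S1 + (E1 - p1)) + a2 * d2)) by (unfold S1', S2'; ring).
  assert (I2 : a1 * (B1 + (E1 - p1)) + (B2 + (E2 - p2)) - a1 * (S1' + a2 * S2')
     = (a1 * (B1 - S1) + (B2 - S2)) + (1 - a1 * a2) * ((S2 + (E2 - p2)) + a1 * d1)) by (unfold S1', S2'; ring).
  assert (P1 : 0 <= (1 - a1 * a2) * ((S1 + (E1 - p1)) + a2 * d2)) by (apply Rmult_le_pos; unfold S1' in HS1; nra).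
  assert (P2 : 0 <= (1 - a1 * a2) * ((S2 + (E2 - p2)) + a1 * d1)) by (apply Rmult_le_pos; unfold S2' in HS2; nra).
  assert (P3 : 0 <= (1 - a1 * a2) * d1) by (apply Rmult_le_pos; lra).
  assert (P4 : 0 <= (1 - a1 * a2) * d2) by (apply Rmult_le_pos; lra).
  assert (Q1 : 0 <= a1 * S1') by (apply Rmult_le_pos; lra).
  assert (Q2 : 0 <= a2 * S2') by (apply Rmult_le_pos; lra).
  unfold r, gstep; clear r.
  destruct (Rlt_dec (B1 + (E1 - p1)) 0) as [C1|C1]; simpl.
  - set (b1 := B1 + (E1 - p1)) in *. set (b2 := B2 + (E2 - p2)) in *.
    assert (Ha : 0 < a2).
    { destruct Ha2 as [[Ha|Ha] _]; auto. subst a2. exfalso. nra. }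
    set (t := - b1 / a2).
    assert (Ht : a2 * t = - b1) by (unfold t; field; lra).
    replace (b2 + b1 / a2) with (b2 - t) by (unfold t; field; lra).
    assert (Hx : 0 <= a2 * (b2 - t - (a1 * S1' + S2'))) by nra.
    assert (Hy : 0 <= b2 - t - (a1 * S1' + S2')).
    { destruct (Rle_dec 0 (b2 - t - (a1 * S1' + S2'))); auto. nra. }
    assert (0 <= t) by nra.
    assert (J : a2 * b2 + b1 - S1' - a2 * S2' = ((B1 - S1) + a2 * (B2 - S2)) + (1 - a1 * a2) * d1)
      by (unfold b1, b2, S1', S2'; ring).
    unfold b1, b2 in *.
    repeat split; try lra; try nra.
  - destruct (Rlt_dec (B2 + (E2 - p2)) 0) as [C2|C2]; simpl.
    + set (b1 := B1 + (E1 - p1)) in *. set (b2 := B2 + (E2 - p2)) in *.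
      assert (Ha : 0 < a1).
      { destruct Ha1 as [[Ha|Ha] _]; auto. subst a1. exfalso. nra. }
      set (t := - b2 / a1).
      assert (Ht : a1 * t = - b2) by (unfold t; field; lra).
      replace (b1 + b2 / a1) with (b1 - t) by (unfold t; field; lra).
      assert (Hx : 0 <= a1 * (b1 - t - (S1' + a2 * S2'))) by nra.
      assert (Hy : 0 <= b1 - t - (S1' + a2 * S2')).
      { destruct (Rle_dec 0 (b1 - t - (S1' + a2 * S2'))); auto. nra. }
      assert (0 <= t) by nra.
      assert (J : a1 * b1 + b2 - a1 * S1' - S2' = (a1 * (B1 - S1) + (B2 - S2)) + (1 - a1 * a2) * d2)
        by (unfold b1, b2, S1', S2'; ring).
      unfold b1, b2 in *.
      repeat split; try lra; try nra.
    + repeat split; try lra; unfold S1', S2' in *; nra.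
Qed.

Fixpoint gst (a1 a2 : R) (e1 e2 : nat -> R) (i : nat) : R * R :=
  match i with
  | O => (0, 0)
  | S k => fst (gstep a1 a2 (fst (gst a1 a2 e1 e2 k)) (snd (gst a1 a2 e1 e2 k)) (e1 (S k)) (e2 (S k)))
  end.

Definition gtau (a1 a2 : R) (e1 e2 : nat -> R) (i : nat) : R * R :=
  match i with
  | O => (0, 0)
  | S k => snd (gstep a1 a2 (fst (gst a1 a2 e1 e2 k)) (snd (gst a1 a2 e1 e2 k)) (e1 (S k)) (e2 (S k)))
  end.

Lemma PtoQ N h1 h2 s1 s2 a1 a2 E1 E2 p1 p2 d1 d2 :
  0 < h1 -> 0 < h2 -> 0 < s1 -> 0 < s2 ->
  0 <= a1 <= 1 -> 0 <= a2 <= 1 -> (forall i, 0 <= E1 i) -> (forall i, 0 <= E2 i) ->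
  feasibleP N a1 a2 E1 E2 p1 p2 d1 d2 ->
  exists pb1 pb2, feasibleQ N E1 E2 pb1 pb2 /\
    objP N h1 h2 s1 s2 p1 p2 <= objQ N h1 h2 s1 s2 a1 a2 pb1 pb2.
Proof.
  intros Hh1 Hh2 Hs1 Hs2 Ha1 Ha2 HE1 HE2 HP.
  set (e1 := fun n => E1 n - p1 n). set (e2 := fun n => E2 n - p2 n).
  set (G := gst a1 a2 e1 e2). set (T := gtau a1 a2 e1 e2).
  set (pb1 := fun n => p1 n - a2 * snd (T n) + fst (T n)).
  set (pb2 := fun n => p2 n - a1 * fst (T n) + snd (T n)).
  set (S1 := battery E1 p1 d1 d2 a2). set (S2 := battery E2 p2 d2 d1 a1).
  assert (Inv : forall i, (i <= N)%nat ->
    0 <= fst (G i) /\ 0 <= snd (G i) /\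
    0 <= (fst (G i) - S1 i) + a2 * (snd (G i) - S2 i) /\
    0 <= a1 * (fst (G i) - S1 i) + (snd (G i) - S2 i) /\
    fst (G i) = psum (fun n => E1 n - pb1 n) i /\ snd (G i) = psum (fun n => E2 n - pb2 n) i).
  { induction i; intros Hi.
    - unfold G, S1, S2, battery; simpl. rewrite !psum_0. repeat split; lra.
    - destruct IHi as [I1 [I2 [I3 [I4 [I5 I6]]]]]; [lia|].
      destruct (HP (S i)) as [F1 [F2 [F3 [F4 [F5 F6]]]]]; [lia|].
      unfold S1, S2, battery in F1, F2. rewrite psum_S in F1, F2.
      fold (battery E1 p1 d1 d2 a2 i) (S1 i) in F1.
      fold (battery E2 p2 d2 d1 a1 i) (S2 i) in F2.
      pose proof (step_ok a1 a2 (fst (G i)) (snd (G i)) (S1 i) (S2 i) (E1 (S i)) (E2 (S i))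
        (p1 (S i)) (p2 (S i)) (d1 (S i)) (d2 (S i)) Ha1 Ha2 I1 I2 (HE1 _) (HE2 _) F5 F6 F3 F4 I3 I4 F1 F2)
        as [K1 [K2 [K3 [K4 [K5 [K6 [K7 [K8 [K9 K10]]]]]]]]].
      change (G (S i)) with (fst (gstep a1 a2 (fst (G i)) (snd (G i)) (E1 (S i) - p1 (S i)) (E2 (S i) - p2 (S i)))).
      assert (HT : T (S i) = snd (gstep a1 a2 (fst (G i)) (snd (G i)) (E1 (S i) - p1 (S i)) (E2 (S i) - p2 (S i)))) by reflexivity.
      unfold S1, S2, battery. rewrite !psum_S. fold (battery E1 p1 d1 d2 a2 i) (S1 i).
      fold (battery E2 p2 d2 d1 a1 i) (S2 i). rewrite <- I5, <- I6.
      unfold pb1, pb2. rewrite HT. repeat split; lra. }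
  assert (Slot : forall i, (1 <= i <= N)%nat ->
    0 <= fst (T i) /\ 0 <= snd (T i) /\ a2 * snd (T i) <= p1 i /\ a1 * fst (T i) <= p2 i).
  { intros [|i] Hi; [lia|].
    destruct (Inv i) as [I1 [I2 [I3 [I4 [I5 I6]]]]]; [lia|].
    destruct (HP (S i)) as [F1 [F2 [F3 [F4 [F5 F6]]]]]; [lia|].
    unfold battery in F1, F2. rewrite psum_S in F1, F2.
    fold (battery E1 p1 d1 d2 a2 i) (S1 i) in F1.
    fold (battery E2 p2 d2 d1 a1 i) (S2 i) in F2.
    pose proof (step_ok a1 a2 (fst (G i)) (snd (G i)) (S1 i) (S2 i) (E1 (S i)) (E2 (S i))
      (p1 (S i)) (p2 (S i)) (d1 (S i)) (d2 (S i)) Ha1 Ha2 I1 I2 (HE1 _) (HE2 _) F5 F6 F3 F4 I3 I4 F1 F2)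
      as [K1 [K2 [K3 [K4 [K5 [K6 _]]]]]].
    change (T (S i)) with (snd (gstep a1 a2 (fst (G i)) (snd (G i)) (E1 (S i) - p1 (S i)) (E2 (S i) - p2 (S i)))).
    repeat split; lra. }
  exists pb1, pb2. split.
  - intros i Hi. destruct (Inv i) as [I1 [I2 [_ [_ [I5 I6]]]]]; [lia|].
    destruct (Slot i Hi) as [T1 [T2 [T3 T4]]].
    rewrite <- I5, <- I6. unfold pb1, pb2. repeat split; lra.
  - unfold objP, objQ. apply psum_le. intros i Hi.
    destruct (Slot i Hi) as [T1 [T2 [T3 T4]]].
    replace (p1 i) with (pb1 i - fst (T i) + a2 * snd (T i)) at 1 by (unfold pb1; ring).
    replace (p2 i) with (pb2 i - snd (T i) + a1 * fst (T i)) at 1 by (unfold pb2; ring).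
    apply Rfun_ge; auto; unfold pb1, pb2; lra.
Qed.

Lemma Qbound N h1 h2 s1 s2 a1 a2 E1 E2 pb1 pb2 :
  0 < h1 -> 0 < h2 -> 0 < s1 -> 0 < s2 ->
  0 <= a1 <= 1 -> 0 <= a2 <= 1 -> (forall i, 0 <= E1 i) -> (forall i, 0 <= E2 i) ->
  feasibleQ N E1 E2 pb1 pb2 ->
  objQ N h1 h2 s1 s2 a1 a2 pb1 pb2 <=
  INR N * Cap h1 h2 s1 s2 (psum E1 N + psum E2 N) (psum E1 N + psum E2 N).
Proof.
  intros Hh1 Hh2 Hs1 Hs2 Ha1 Ha2 HE1 HE2 HQ.
  unfold objQ. rewrite <- psum_const. apply psum_le. intros i Hi.
  assert (B : forall (E pb : nat -> R), (forall n, 0 <= E n) ->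
     (forall n, (1 <= n <= N)%nat -> 0 <= pb n /\ 0 <= psum (fun m => E m - pb m) n) ->
     pb i <= psum E N).
  { intros E pb HE Hpb.
    assert (pb i <= psum pb i) by (apply psum_term; [intros; apply Hpb; lia| lia]).
    assert (0 <= psum (fun m => E m - pb m) i) by (apply Hpb; auto).
    rewrite psum_minus in H0.
    assert (psum E i <= psum E N) by (apply psum_mono; [intros; auto| lia]).
    lra. }
  assert (X1 : pb1 i <= psum E1 N) by (apply B; auto; intros n Hn; destruct (HQ n Hn); tauto).
  assert (X2 : pb2 i <= psum E2 N) by (apply B; auto; intros n Hn; destruct (HQ n Hn); tauto).
  destruct (HQ i Hi) as [_ [_ [Y1 Y2]]].
  destruct (Rfun_lub h1 h2 s1 s2 a1 a2 (pb1 i) (pb2 i)) as [_ Hb]; auto.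
  eapply Rle_trans; [apply Hb|]. apply Cap_le; auto; lra.
Qed.

Lemma Qapprox N h1 h2 s1 s2 a1 a2 E1 E2 pb1 pb2 eps :
  0 < h1 -> 0 < h2 -> 0 < s1 -> 0 < s2 ->
  0 <= a1 <= 1 -> 0 <= a2 <= 1 -> 0 < eps ->
  feasibleQ N E1 E2 pb1 pb2 ->
  exists v, valuesP N h1 h2 s1 s2 a1 a2 E1 E2 v /\
    objQ N h1 h2 s1 s2 a1 a2 pb1 pb2 - INR N * eps <= v.
Proof.
  intros Hh1 Hh2 Hs1 Hs2 Ha1 Ha2 He HQ.
  assert (Ex : forall i, exists d : R * R, (1 <= i <= N)%nat ->
     (0 <= fst d <= pb1 i /\ 0 <= snd d <= pb2 i) /\
     Rfun h1 h2 s1 s2 a1 a2 (pb1 i) (pb2 i) - eps <=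
     Cap h1 h2 s1 s2 (pb1 i - fst d + a2 * snd d) (pb2 i - snd d + a1 * fst d)).
  { intros i. destruct (le_lt_dec 1 i) as [L1|L1]; [destruct (le_lt_dec i N) as [L2|L2]|].
    2,3: exists (0,0); intros; lia.
    destruct (HQ i (conj L1 L2)) as [_ [_ [Y1 Y2]]].
    destruct (Rfun_lub h1 h2 s1 s2 a1 a2 (pb1 i) (pb2 i)) as [[Hu Hl] _]; auto.
    apply NNPP. intros Hn. 
    assert (Hub : is_upper_bound (Rset h1 h2 s1 s2 a1 a2 (pb1 i) (pb2 i)) (Rfun h1 h2 s1 s2 a1 a2 (pb1 i) (pb2 i) - eps)).
    { intros r [x1 [x2 [Hx1 [Hx2 ->]]]].
      destruct (Rle_dec (Cap h1 h2 s1 s2 (pb1 i - x1 + a2 * x2) (pb2 i - x2 + a1 * x1)) (Rfun h1 h2 s1 s2 a1 a2 (pb1 i) (pb2 i) - eps)) as [|n]; auto.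
      exfalso. apply Hn. exists (x1, x2). intros _. simpl. split; [split; auto| lra]. }
    specialize (Hl _ Hub). lra. }
  set (f := fun i => proj1_sig (constructive_indefinite_description _ (Ex i))).
  assert (Hf : forall i, (1 <= i <= N)%nat ->
     (0 <= fst (f i) <= pb1 i /\ 0 <= snd (f i) <= pb2 i) /\
     Rfun h1 h2 s1 s2 a1 a2 (pb1 i) (pb2 i) - eps <=
     Cap h1 h2 s1 s2 (pb1 i - fst (f i) + a2 * snd (f i)) (pb2 i - snd (f i) + a1 * fst (f i))).
  { intros i. unfold f. destruct (constructive_indefinite_description _ (Ex i)). simpl. auto. }
  exists (objP N h1 h2 s1 s2 (fun i => pb1 i - fst (f i) + a2 * snd (f i)) (fun i => pb2 i - snd (f i) + a1 * fst (f i))).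
  split.
  - exists (fun i => pb1 i - fst (f i) + a2 * snd (f i)), (fun i => pb2 i - snd (f i) + a1 * fst (f i)),
      (fun i => fst (f i)), (fun i => snd (f i)). split; auto.
    apply QtoP; auto. intros i Hi. apply Hf; auto.
  - unfold objQ, objP. rewrite <- psum_const, <- psum_minus. apply psum_le.
    intros i Hi. apply Hf; auto.
Qed.

Theorem mainTheorem4 (N : nat) (h1 h2 s1 s2 a1 a2 : R) (E1 E2 : nat -> R)
  (Hh1 : 0 < h1) (Hh2 : 0 < h2) (Hs1 : 0 < s1) (Hs2 : 0 < s2)
  (Ha1 : 0 <= a1 <= 1) (Ha2 : 0 <= a2 <= 1)
  (HE1 : forall i, 0 <= E1 i) (HE2 : forall i, 0 <= E2 i) :
  (exists v, is_lub (valuesP N h1 h2 s1 s2 a1 a2 E1 E2) v /\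
             is_lub (valuesQ N h1 h2 s1 s2 a1 a2 E1 E2) v)
  /\
  (forall pb1 pb2 d1 d2 : nat -> R,
     optimalQ N h1 h2 s1 s2 a1 a2 E1 E2 pb1 pb2 ->
     (forall i, (1 <= i <= N)%nat ->
        is_maximizer h1 h2 s1 s2 a1 a2 (pb1 i) (pb2 i) (d1 i) (d2 i)) ->
     optimalP N h1 h2 s1 s2 a1 a2 E1 E2
       (fun i => pb1 i - d1 i + a2 * d2 i)
       (fun i => pb2 i - d2 i + a1 * d1 i) d1 d2).
Proof.
  split.
  - assert (Hb : bound (valuesQ N h1 h2 s1 s2 a1 a2 E1 E2)).
    { exists (INR N * Cap h1 h2 s1 s2 (psum E1 N + psum E2 N) (psum E1 N + psum E2 N)).
      intros v [pb1 [pb2 [HQ ->]]]. apply Qbound; auto. }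
    assert (Hne : exists v, valuesQ N h1 h2 s1 s2 a1 a2 E1 E2 v).
    { exists (objQ N h1 h2 s1 s2 a1 a2 (fun _ => 0) (fun _ => 0)). exists (fun _ => 0), (fun _ => 0).
      split; auto. intros i Hi.
      assert (forall E : nat -> R, (forall n, 0 <= E n) -> 0 <= psum (fun n => E n - 0) i).
      { intros E HE. apply psum_nonneg. intros; specialize (HE i0); lra. }
      repeat split; auto; lra. }
    destruct (completeness _ Hb Hne) as [v [Hu Hl]].
    exists v. split; [|split; auto].
    split.
    + intros w [q1 [q2 [e1 [e2 [HP ->]]]]].
      destruct (PtoQ N h1 h2 s1 s2 a1 a2 E1 E2 q1 q2 e1 e2) as [pb1 [pb2 [HQ Hle]]]; auto.
      eapply Rle_trans; [apply Hle|]. apply Hu. exists pb1, pb2; auto.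
    + intros u Hu'. apply Hl. intros w [pb1 [pb2 [HQ ->]]].
      apply Rnot_lt_le. intros Hlt.
      set (eps := (objQ N h1 h2 s1 s2 a1 a2 pb1 pb2 - u) / (INR N + 1)).
      assert (HN : 0 <= INR N) by apply pos_INR.
      assert (He : 0 < eps) by (unfold eps; apply Rdiv_lt_0_compat; lra).
      destruct (Qapprox N h1 h2 s1 s2 a1 a2 E1 E2 pb1 pb2 eps) as [w [Hw Hw2]]; auto.
      specialize (Hu' w Hw).
      assert (INR N * eps < objQ N h1 h2 s1 s2 a1 a2 pb1 pb2 - u).
      { unfold eps. apply (Rmult_lt_reg_r (INR N + 1)); [lra|].
        field_simplify; [|lra]. nra. }
      lra.
  - intros pb1 pb2 d1 d2 [HQ HQo] Hm.
    assert (HPf : feasibleP N a1 a2 E1 E2 (fun i => pb1 i - d1 i + a2 * d2 i)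
       (fun i => pb2 i - d2 i + a1 * d1 i) d1 d2).
    { apply QtoP; auto. intros i Hi. destruct (Hm i Hi) as [X [Y _]]. auto. }
    split; auto.
    intros q1 q2 e1 e2 HP.
    destruct (PtoQ N h1 h2 s1 s2 a1 a2 E1 E2 q1 q2 e1 e2) as [c1 [c2 [HQ' Hle]]]; auto.
    eapply Rle_trans; [apply Hle|]. eapply Rle_trans; [apply HQo; eauto|].
    unfold objQ, objP. right. apply psum_ext. intros i Hi. apply Rfun_max. auto.
Qed.
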